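(* Let $d\ge2$, $\tau>0$ and $\varepsilon\in(0,1]$. For any $t\in(0,\tau]$ and $x,x'\in\mathbb{R}$ with $|x-x'|\le h^{-1}(1/t)/4$ and $|x-x'|\le\varepsilon/4$, $$\tilde g^{(\varepsilon)}_t(x')\le\tilde g^{(\varepsilon)}_t(x/2).$$
   Context: Let $\nu$ be a symmetric density of an infinite Lévy measure on $\mathbb{R}$ (with $\int(x^2\wedge1)\nu<\infty$), such that for some $\eta_4>0$, $\nu\in C^1(0,\eta_4)$, $\nu'<0$ and $-\nu'(x)/x$ decreasing on $(0,\eta_4)$. Let $\psi(\xi)=\int(1-\cos(\xi x))\nu(x)dx$ satisfy $\psi(\lambda\theta)\ge\underline{C}\lambda^\alpha\psi(\theta)$ for $\lambda\ge1,\theta\ge0$ and $\psi(\lambda\theta)\le\overline{C}\lambda^\beta\psi(\theta)$ for $\lambda\ge1,\theta\ge1$, with $0<\alpha\le\beta<2$. $h(r)=\int(1\wedge x^2r^{-2})\nu(x)dx$ for $r>0$ (continuous, strictly decreasing from $\infty$ to $0$), $h^{-1}$ its inverse. $\tilde g^{(\varepsilon)}_t(x)=\frac{1}{h^{-1}(1/t)}\wedge\frac{t h(|x|)}{|x|}$ if $|x|<\varepsilon$ (with $h(0)/0=\infty$), and $\tilde g^{(\varepsilon)}_t(x)=c_\varepsilon t^{(d+\beta-1)/\alpha}e^{-|x|}$ if $|x|\ge\varepsilon$, where $c_\varepsilon=\Big(\frac{1}{h^{-1}(1/\tau)}\wedge\frac{\tau h(\varepsilon)}{\varepsilon}\Big)\frac{e^{\varepsilon}}{\tau^{(d+\beta-1)/\alpha}}$.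 *)

(* Defs.v *)
From mathcomp Require Import all_boot all_order all_algebra.
From mathcomp Require Import all_classical all_reals all_analysis.
Set Implicit Arguments. Unset Strict Implicit. Unset Printing Implicit Defensive.
Import Order.TTheory GRing.Theory Num.Theory.
Local Open Scope classical_set_scope.
Local Open Scope ring_scope.

Section Defs.
Variable R : realType.

Definition psiL (nu : R -> R) (xi : R) : R :=
  fine (\int[@lebesgue_measure R]_x ((1 - cos (xi * x)) * nu x)%:E)%E.

Definition hL (nu : R -> R) (r : R) : R :=
  fine (\int[@lebesgue_measure R]_x ((Num.min 1 (x ^+ 2 / r ^+ 2)) * nu x)%:E)%E.

(* inverse of the (continuous, strictly decreasing, onto (0,oo)) function h:
   h^{-1}(s) = sup {r > 0 | s <= h r}; for such h this is the unique r with h r = s *)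
Definition hinvL (nu : R -> R) (s : R) : R :=
  sup [set r : R | 0 < r /\ s <= hL nu r].

Definition ceps (nu : R -> R) (d : nat) (alpha beta tau eps : R) : R :=
  Num.min (1 / hinvL nu (1 / tau)) (tau * hL nu eps / eps) * expR eps
  / tau `^ ((d%:R + beta - 1) / alpha).

(* tilde g^{(eps)}_t(x), with the convention h(0)/0 = +oo *)
Definition gtilde (nu : R -> R) (d : nat) (alpha beta tau eps t x : R) : R :=
  if `|x| < eps then
    (if x == 0 then 1 / hinvL nu (1 / t)
     else Num.min (1 / hinvL nu (1 / t)) (t * hL nu `|x| / `|x|))
  else ceps nu d alpha beta tau eps * t `^ ((d%:R + beta - 1) / alpha)
       * expR (- `|x|).

End Defs.

(* Main.v *)
Require Import Defs.
From mathcomp Require Import all_boot all_order all_algebra.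
From mathcomp Require Import all_classical all_reals all_analysis.
From mathcomp Require Import measurable_realfun ring lra.
Import Order.TTheory GRing.Theory Num.Theory.
Local Open Scope classical_set_scope.
Local Open Scope ring_scope.

Lemma aux (R : realType) (a k : R) : 0 <= a -> 0 <= k -> Num.min 1 (a * k) <= (1 + k) * Num.min a 1.
Proof.
move=> a0 k0; have /orP[a1|a1] := le_total a 1.
  rewrite (min_l a1) ge_min; apply/orP; right.
  rewrite mulrC ler_wpM2r //; lra.
have -> : Num.min a 1 = 1 by apply/min_idPr.
rewrite mulr1 ge_min; apply/orP; left; lra.
Qed.

Section H.
Variables (R : realType) (nu : R -> R).
Hypothesis nu_meas : measurable_fun [set: R] nu.
Hypothesis nu_ge0 : forall x, 0 <= nu x.
Hypothesis nu_levy : (\int[@lebesgue_measure R]_x ((Num.min (x ^+ 2) 1) * nu x)%:E < +oo)%E.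

Let F r := fun x : R => (Num.min 1 (x ^+ 2 / r ^+ 2) * nu x).

Lemma F_meas r : measurable_fun [set: R] (fun x => (F r x)%:E).
Proof.
apply: measurableT_comp => //; apply: measurable_funM => //.
apply: measurable_minr => //; apply: measurable_funM => //; exact: exprn_measurable.
Qed.

Lemma F_ge0 r x : 0 <= F r x.
Proof.
apply: mulr_ge0 => //; rewrite le_min ler01 /=.
by apply: mulr_ge0; rewrite ?invr_ge0 sqr_ge0.
Qed.

Lemma F_le r x : F r x <= (1 + (r ^+ 2)^-1) * (Num.min (x ^+ 2) 1 * nu x).
Proof.
rewrite /F mulrA ler_wpM2r //.
by apply: aux; rewrite ?invr_ge0 sqr_ge0.
Qed.

Lemma hfin r : (\int[@lebesgue_measure R]_x (F r x)%:E < +oo)%E.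
Proof.
apply: (le_lt_trans (y := ((1 + (r ^+ 2)^-1)%:E *
   \int[@lebesgue_measure R]_x ((Num.min (x ^+ 2) 1) * nu x)%:E)%E)).
  rewrite -ge0_integralZl_EFin //.
  - apply: ge0_le_integral => //.
    + by move=> x _; rewrite lee_fin F_ge0.
    + exact: F_meas.
    + apply: measurable_funeM.
      apply: measurableT_comp => //; apply: measurable_funM => //.
      apply: measurable_minr => //; exact: exprn_measurable.
    + by move=> x _; rewrite -EFinM lee_fin F_le.
  - by move=> x _; rewrite lee_fin; apply: mulr_ge0 => //; rewrite le_min ler01 sqr_ge0.
  - apply: measurableT_comp => //; apply: measurable_funM => //.
    apply: measurable_minr => //; exact: exprn_measurable.
  - by rewrite addr_ge0 // invr_ge0 sqr_ge0.
rewrite lte_mul_pinfty //.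
- by rewrite lee_fin addr_ge0 // invr_ge0 sqr_ge0.
Qed.


Lemma F_mono r1 r2 x : 0 < r1 -> r1 <= r2 -> F r2 x <= F r1 x.
Proof.
move=> r10 r12; rewrite /F ler_wpM2r //.
rewrite le_min !ge_min lexx /=; apply/orP; right.
rewrite ler_wpM2l ?sqr_ge0 // lef_pV2 ?posrE ?exprn_gt0 //; last by apply: lt_le_trans r12.
nra.
Qed.

Lemma h_ge0 r : 0 <= hL nu r.
Proof. by apply: fine_ge0; apply: integral_ge0 => x _; rewrite lee_fin F_ge0. Qed.

Lemma h_fin r : (\int[@lebesgue_measure R]_x (F r x)%:E)%E \is a fin_num.
Proof. by rewrite ge0_fin_numE ?hfin //; apply: integral_ge0 => x _; rewrite lee_fin F_ge0. Qed.

Lemma h_noninc r1 r2 : 0 < r1 -> r1 <= r2 -> hL nu r2 <= hL nu r1.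
Proof.
move=> r10 r12; apply: fine_le; rewrite ?h_fin //.
apply: ge0_le_integral => //.
- by move=> x _; rewrite lee_fin F_ge0.
- exact: F_meas.
- exact: F_meas.
- by move=> x _; rewrite lee_fin F_mono.
Qed.


Hypothesis nu_inf : (\int[@lebesgue_measure R]_x (nu x)%:E = +oo)%E.

Lemma h_big M : exists2 r, 0 < r & M <= hL nu r.
Proof.
pose g' := fun (n : nat) (x : R) => (F (n.+1%:R^-1) x)%:E.
pose D := [set: R] `\ 0.
have mD : measurable D by apply: measurableD.
have mg' n : measurable_fun D (g' n) by apply: measurable_funS (F_meas _).
have g'0 n x : D x -> (0 <= g' n x)%E by move=> _; rewrite lee_fin F_ge0.
have nd_g' x : D x -> nondecreasing_seq (g'^~ x).
  move=> _ m n mn; rewrite lee_fin; apply: F_mono.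
    by rewrite invr_gt0.
  by rewrite lef_pV2 ?posrE // ler_nat.
have := @cvg_monotone_convergence _ _ _ (@lebesgue_measure R) _ mD _ mg' g'0 nd_g'.
have -> : (\int[lebesgue_measure]_(x in D) limn (g'^~ x) = +oo)%E.
  have mn : measurable_fun [set: R] (fun x => (nu x)%:E) by apply: measurableT_comp.
  rewrite -nu_inf -(integral_setD1 (f := fun x => (nu x)%:E) (r:=0) (D:=setT)); last first.
    by apply: measurable_funS mn.
    exact: mD.
  apply: eq_integral => x; rewrite inE => -[_ /eqP x0].
  apply/cvg_lim => //; apply: cvg_near_cst.
  exists (Num.truncn (`|x|^-1)) => // n /= hn.
  rewrite /g' /F; congr (_%:E).
  have -> : Num.min 1 (x ^+ 2 / n.+1%:R^-1 ^+ 2) = 1; last by rewrite mul1r.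
  apply/min_idPl.
  have x0' : 0 < `|x| by rewrite normr_gt0.
  have h1 : 1 <= `|x| * n.+1%:R.
    rewrite -ler_pdivrMl // mulr1; apply: ltW.
    by rewrite -truncn_le_nat.
  rewrite exprVn invrK -real_normK ?num_real //.
  nra.
move=> /cvgeyPge /(_ M) [N _ /(_ N (leqnn N))] HN.
exists (N.+1%:R^-1); first by rewrite invr_gt0.
rewrite -lee_fin /hL fineK ?h_fin //.
apply: (le_trans HN); apply: ge0_subset_integral => //.
- exact: F_meas.
- by move=> x _; rewrite lee_fin F_ge0.
Qed.

Lemma hinv_ge0 s : 0 <= hinvL nu s.
Proof.
rewrite /hinvL; set S := [set r | _].
have [hs|hs] := pselect (has_sup S); last by rewrite sup_out.
case: (hs) => -[r [r0 rs]] _.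
apply: (le_trans (ltW r0)); apply: sup_upper_bound => //.
Qed.

Lemma below_hinv s r : 0 < r -> r < hinvL nu s -> s <= hL nu r.
Proof.
rewrite /hinvL; set S := [set r | _] => r0 rH.
have [S0|S0] := pselect (S !=set0); last first.
  have : S = set0 by apply/seteqP; split => // y Sy; apply: S0; exists y.
  by move=> SE; move: rH; rewrite SE sup0 => /(lt_trans r0); rewrite ltxx.
have [y [y0 sy] ry] := sup_gt S0 rH.
apply: (le_trans sy); apply: h_noninc => //; exact: ltW.
Qed.

Lemma hinv_mono t tau : 0 < t -> t <= tau -> 1 / hinvL nu (1 / tau) <= 1 / hinvL nu (1 / t).
Proof.
move=> t0 tt.
have tau0 : 0 < tau by apply: lt_le_trans tt.
have st : 1 / tau <= 1 / t by rewrite !div1r lef_pV2 ?posrE.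
rewrite /hinvL; set St := [set r | 0 < r /\ 1 / t <= hL nu r];
  set Sa := [set r | 0 < r /\ 1 / tau <= hL nu r].
have sub : St `<=` Sa by move=> y [y0 hy]; split => //; apply: le_trans hy.
have [r r0 hr] := h_big (1 / t).
have Str : St r by [].
have [ha|ha] := pselect (has_sup Sa); last first.
  rewrite (sup_out ha) invr0 mulr0 mulr_ge0 // invr_ge0.
  exact: (hinv_ge0 (1 / t)).
have hst : has_sup St.
  by split; [exists r | case: ha => _ [b hb]; exists b => y /sub /hb].
have Hpos : 0 < sup St by apply: lt_le_trans r0 _; apply: sup_upper_bound.
have Hle : sup St <= sup Sa.
  by apply: ge_sup; [exists r | move=> y /sub; apply: sup_upper_bound].
by rewrite !div1r lef_pV2 ?posrE //; apply: lt_le_trans Hle.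
Qed.

End H.

Theorem lemma2p9 (R : realType) (nu : R -> R) (alpha beta Cl Cu eta4 : R)
  (d : nat) (tau eps : R)
  (* nu is a symmetric Levy density of an infinite Levy measure *)
  (nu_meas : measurable_fun [set: R] nu)
  (nu_ge0 : forall x, 0 <= nu x)
  (nu_sym : forall x, nu (- x) = nu x)
  (nu_levy : (\int[@lebesgue_measure R]_x ((Num.min (x ^+ 2) 1) * nu x)%:E < +oo)%E)
  (nu_inf : (\int[@lebesgue_measure R]_x (nu x)%:E = +oo)%E)
  (* regularity near 0 *)
  (eta4_gt0 : 0 < eta4)
  (nu_der : forall x, 0 < x < eta4 -> derivable nu x 1)
  (nu_C1 : {within `]0, eta4[, continuous (derive1 nu)})
  (nu'_lt0 : forall x, 0 < x < eta4 -> derive1 nu x < 0)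
  (nu'_dec : forall x y, 0 < x -> x <= y -> y < eta4 ->
              - derive1 nu y / y <= - derive1 nu x / x)
  (* weak scaling of psi *)
  (alpha_gt0 : 0 < alpha) (alpha_le_beta : alpha <= beta) (beta_lt2 : beta < 2)
  (Cl_gt0 : 0 < Cl) (Cu_gt0 : 0 < Cu)
  (psi_low : forall lam th, 1 <= lam -> 0 <= th ->
      Cl * lam `^ alpha * psiL nu th <= psiL nu (lam * th))
  (psi_up : forall lam th, 1 <= lam -> 1 <= th ->
      psiL nu (lam * th) <= Cu * lam `^ beta * psiL nu th)
  (* the lemma *)
  (d_ge2 : (2 <= d)%N) (tau_gt0 : 0 < tau) (eps_gt0 : 0 < eps) (eps_le1 : eps <= 1) :
  forall t x x' : R, 0 < t -> t <= tau ->
    `|x - x'| <= hinvL nu (1 / t) / 4 -> `|x - x'| <= eps / 4 ->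
    gtilde nu d alpha beta tau eps t x' <= gtilde nu d alpha beta tau eps t (x / 2).
Proof.
move=> t x x' t0 tle hx1 hx2.
set H := hinvL nu (1 / t).
have H0 : 0 <= H by apply: hinv_ge0.
have hx1' : `|x - x'| <= H / 4 by exact: hx1.
set A := 1 / H.
have A0 : 0 <= A by rewrite /A div1r invr_ge0.
set h := hL nu.
have h0 : forall r, 0 <= h r by move=> r; apply: h_ge0.
have f_mono : forall r1 r2, 0 < r1 -> r1 <= r2 -> t * h r2 / r2 <= t * h r1 / r1.
  move=> r1 r2 r10 r12; have r20 : 0 < r2 by apply: lt_le_trans r12.
  rewrite -!mulrA; apply: ler_wpM2l; first exact: ltW.
  apply: ler_pM => //.
  - by rewrite invr_ge0 ltW.
  - by apply: h_noninc.
  - by rewrite lef_pV2 ?posrE.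
have tri1 : `|x| <= `|x - x'| + `|x'| by rewrite -{1}(subrK x' x) ler_normD.
have tri2 : `|x'| <= `|x - x'| + `|x| by rewrite distrC -{1}(subrK x x') ler_normD.
have nx2 : `|x / 2| = `|x| / 2 by rewrite normrM normfV (ger0_norm (_ : (0:R) <= 2)).
rewrite /gtilde -/H -/A -/h nx2.
have [hx'|hx'] := ltP `|x'| eps; have [hx|hx] := ltP (`|x| / 2) eps.
-
  have LA : (if x' == 0 then A else Num.min A (t * h `|x'| / `|x'|)) <= A.
    by case: ifP => _; rewrite ?ge_min lexx.
  have [x20|x20] := eqVneq (x / 2) 0; first exact: LA.
  have r0 : 0 < `|x| / 2 by rewrite -nx2 normr_gt0.
  have [rH|rH] := ltP (`|x| / 2) H.
    apply: (le_trans LA); rewrite le_min lexx /=.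
    have hr : 1 / t <= h (`|x| / 2) by apply: below_hinv.
    have : 1 <= t * h (`|x| / 2).
      by rewrite -ler_pdivrMl // mulr1 -div1r.
    move=> th; rewrite /A.
    apply: (@le_trans _ _ (1 / (`|x| / 2))).
      by rewrite !div1r lef_pV2 ?posrE ?ltW // (lt_le_trans r0 (ltW rH)).
    by apply: ler_pM => //; rewrite ?invr_ge0 ?ltW.
  have hx'r : `|x| / 2 <= `|x'| by lra.
  have x'0 : x' != 0 by rewrite -normr_gt0; apply: lt_le_trans hx'r.
  rewrite (negbTE x'0) le_min !ge_min lexx /=.
  by apply/orP; right; apply: f_mono.
-
  have : eps < eps by lra.
  by rewrite ltxx.
-
  have r0 : 0 < `|x| / 2 by lra.
  have x20 : (x / 2 == 0) = false by apply/negbTE; rewrite -normr_gt0 nx2.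
  rewrite x20.
  set P := (d%:R + beta - 1) / alpha.
  have P1 : 1 <= P.
    have d2 : (2:R) <= d%:R by rewrite ler_nat.
    by rewrite /P ler_pdivlMr // mul1r; lra.
  set m := Num.min (1 / hinvL nu (1 / tau)) (tau * h eps / eps).
  have m0 : 0 <= m.
    rewrite le_min; apply/andP; split.
      by rewrite div1r invr_ge0 hinv_ge0.
    by apply: mulr_ge0; [apply: mulr_ge0; [exact: ltW | exact: h0] | rewrite invr_ge0 ltW].
  have tau0 : 0 < tau by apply: lt_le_trans tle.
  have tt1 : 0 < t / tau <= 1.
    by rewrite divr_gt0 //= ler_pdivrMr // mul1r.
  have E1 : expR eps * expR (- `|x'|) <= 1 by rewrite -expRD expR_le1; lra.
  have TP : t `^ P = (t / tau) `^ P * tau `^ P.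
    by rewrite -powRM ?ltW ?divr_gt0 // divfK ?gt_eqF.
  have TP0 : 0 < tau `^ P by rewrite powR_gt0.
  have Tle : (t / tau) `^ P <= t / tau by apply: ge1r_powR.
  have T0 : 0 <= (t / tau) `^ P by apply: powR_ge0.
  have eq1 : ceps nu d alpha beta tau eps * t `^ P * expR (- `|x'|)
           = m * ((t / tau) `^ P * (expR eps * expR (- `|x'|))).
    rewrite /ceps -/h -/m -/P TP; field; rewrite gt_eqF //.
  rewrite eq1.
  have L1 : m * ((t / tau) `^ P * (expR eps * expR (- `|x'|))) <= m * (t / tau).
    apply: ler_wpM2l => //; rewrite -[leRHS]mulr1.
    by apply: ler_pM => //; rewrite ?mulr_ge0 ?expR_ge0.
  rewrite le_min; apply/andP; split.
    apply: (le_trans L1); apply: (@le_trans _ _ m).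
      by rewrite -[leRHS]mulr1; apply: ler_wpM2l => //; case/andP: tt1.
    rewrite /m ge_min; apply/orP; left; exact: hinv_mono.
  apply: (le_trans L1).
  apply: (@le_trans _ _ (tau * h eps / eps * (t / tau))).
    apply: ler_wpM2r; first by rewrite ltW // divr_gt0.
    by rewrite /m ge_min lexx orbT.
  apply: (@le_trans _ _ (t * h eps / eps)).
    rewrite le_eqVlt; apply/orP; left; apply/eqP; field.
    by rewrite !gt_eqF.
  apply: f_mono => //; exact: ltW.
-
  apply: ler_wpM2l.
    apply: mulr_ge0; last exact: powR_ge0.
    rewrite /ceps; apply: mulr_ge0; last by rewrite invr_ge0 powR_ge0.
    apply: mulr_ge0; last exact: expR_ge0.
    rewrite le_min; apply/andP; split.
      by rewrite div1r invr_ge0 hinv_ge0.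
    by apply: mulr_ge0; [apply: mulr_ge0; [exact: ltW | exact: h_ge0] | rewrite invr_ge0 ltW].
  rewrite ler_expR; lra.
Qed.
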